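(* Let $(X,d)$ be a compact metric space, $f_{1,\infty}$ an $m$-periodic sequence of continuous surjective self-maps of $X$, and $g=f_m\circ\cdots\circ f_1$. If the autonomous system $(X,g)$ is topologically transitive and has a dense set of periodic points, then $(X,f_{1,\infty})$ is Devaney chaotic.
   Context: $m$-periodic: $f_{n+m}=f_n$ for all $n$. Write $f_1^n=f_n\circ\cdots\circ f_1$. For the non-autonomous system: topologically transitive means for all non-empty open $U,V$ some $n$ with $f_1^n(U)\cap V\ne\emptyset$; a point $x$ is periodic if there is $n$ with $f_1^{nk}(x)=x$ for all $k\in\mathbb{N}$; sensitive means there is $\delta>0$ such that for every $x$ and neighbourhood $U$ of $x$ there exist $y\in U$, $n$ with $d(f_1^n(x),f_1^n(y))>\delta$; Devaney chaotic means topologically transitive, dense periodic points, and sensitive. For the autonomous system $(X,g)$ these notions are the usual ones with $g^n$ in place of $f_1^n$. *)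

(* Defs.v *)
From Stdlib Require Import Reals List.
Open Scope R_scope.

Record MetricSpace := {
  carrier :> Type;
  dist : carrier -> carrier -> R;
  dist_nonneg : forall x y, 0 <= dist x y;
  dist_eq0 : forall x y, dist x y = 0 <-> x = y;
  dist_sym : forall x y, dist x y = dist y x;
  dist_tri : forall x y z, dist x z <= dist x y + dist y z
}.

Section Defs.
Variable X : MetricSpace.

Definition is_open (U : X -> Prop) : Prop :=
  forall x, U x -> exists e, 0 < e /\ forall y, dist X x y < e -> U y.

Definition nonempty (U : X -> Prop) : Prop := exists x, U x.

Definition compact_space : Prop :=
  forall (I : Type) (U : I -> X -> Prop),
    (forall i, is_open (U i)) -> (forall x, exists i, U i x) ->
    exists l : list I, forall x, exists i, In i l /\ U i x.

Definition infinite_space : Prop := ~ exists l : list X, forall x, In x l.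

Definition continuous (g : X -> X) : Prop :=
  forall x e, 0 < e -> exists dl, 0 < dl /\
    forall y, dist X x y < dl -> dist X (g x) (g y) < e.

Definition surjective (g : X -> X) : Prop := forall y, exists x, g x = y.

Definition dense (A : X -> Prop) : Prop :=
  forall U, is_open U -> nonempty U -> exists x, U x /\ A x.

(* A non-autonomous system is f : nat -> X -> X, where f n is f_n for n >= 1
   (the value f 0 is never used). *)
Fixpoint ncomp (f : nat -> X -> X) (n : nat) : X -> X :=
  match n with
  | O => fun x => x
  | S k => fun x => f (S k) (ncomp f k x)
  end.

Definition periodic_seq (f : nat -> X -> X) (m : nat) : Prop :=
  forall n, (1 <= n)%nat -> f (n + m)%nat = f n.

Definition transitive (f : nat -> X -> X) : Prop :=
  forall U V, is_open U -> is_open V -> nonempty U -> nonempty V ->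
    exists n, (1 <= n)%nat /\ exists x, U x /\ V (ncomp f n x).

Definition periodic_point (f : nat -> X -> X) (x : X) : Prop :=
  exists n, (1 <= n)%nat /\ forall k, ncomp f (n * k) x = x.

Definition sensitive (f : nat -> X -> X) : Prop :=
  exists delta, 0 < delta /\
    forall x U, is_open U -> U x ->
      exists y n, U y /\ (1 <= n)%nat /\
        dist X (ncomp f n x) (ncomp f n y) > delta.

Definition devaney_chaotic (f : nat -> X -> X) : Prop :=
  transitive f /\ dense (periodic_point f) /\ sensitive f.

Definition autonomous (g : X -> X) : nat -> X -> X := fun _ => g.

End Defs.

(* Main.v *)
Require Import Defs.
From Stdlib Require Import Reals List.
From Stdlib Require Import Lra Lia Classical.
Open Scope R_scope.

Section H.
Variable M : MetricSpace.
Notation d := (Defs.dist M).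

Fixpoint it (g : M -> M) (n : nat) (x : M) : M :=
  match n with O => x | S k => g (it g k x) end.

Lemma ncomp_auto g n x : ncomp M (autonomous M g) n x = it g n x.
Proof. induction n; simpl; [reflexivity| now rewrite IHn]. Qed.

Lemma it_add g a b x : it g (a + b) x = it g a (it g b x).
Proof. induction a; simpl; [reflexivity| now rewrite IHa]. Qed.

Lemma ncomp_ext f1 f2 n x : (forall i, (1 <= i)%nat -> f1 i = f2 i) ->
  ncomp M f1 n x = ncomp M f2 n x.
Proof. intros H; induction n; simpl; [reflexivity|]. rewrite IHn, H by lia. reflexivity. Qed.

Lemma ncomp_add f a b x :
  ncomp M f (a + b) x = ncomp M (fun i => f (a + i)%nat) b (ncomp M f a x).
Proof.
  induction b; simpl.
  - now rewrite Nat.add_0_r.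
  - rewrite <- plus_n_Sm. simpl. rewrite IHb. reflexivity.
Qed.

Lemma per_iter f m : periodic_seq M f m -> forall j i, (1<=i)%nat -> f (i + j*m)%nat = f i.
Proof.
  intros Hp j; induction j; intros i Hi.
  - simpl. now rewrite Nat.add_0_r.
  - replace (i + S j * m)%nat with ((i + j*m) + m)%nat by lia.
    rewrite Hp by lia. now apply IHj.
Qed.

Lemma ncomp_mult f m : periodic_seq M f m -> forall k x,
  ncomp M f (k*m) x = it (ncomp M f m) k x.
Proof.
  intros Hp k; induction k; intros x; simpl; [reflexivity|].
  replace (m + k*m)%nat with (k*m + m)%nat by lia.
  rewrite ncomp_add. rewrite IHk.
  apply ncomp_ext. intros i Hi. rewrite Nat.add_comm. now apply per_iter.
Qed.

Lemma cont_comp h1 h2 : continuous M h1 -> continuous M h2 -> continuous M (fun x => h2 (h1 x)).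
Proof.
  intros C1 C2 x e He.
  destruct (C2 (h1 x) e He) as [d2 [Hd2 P2]].
  destruct (C1 x d2 Hd2) as [d1 [Hd1 P1]].
  exists d1; split; auto.
Qed.

Lemma cont_id : continuous M (fun x => x).
Proof. intros x e He. exists e; split; auto. Qed.

Lemma cont_ncomp f : (forall n, (1<=n)%nat -> continuous M (f n)) -> forall n, continuous M (ncomp M f n).
Proof.
  intros Hf n; induction n.
  - apply cont_id.
  - change (continuous M (fun x => f (S n) (ncomp M f n x))).
    apply cont_comp; auto. apply Hf; lia.
Qed.

Lemma cont_it g : continuous M g -> forall n, continuous M (it g n).
Proof.
  intros Hg n; induction n.
  - apply cont_id.
  - change (continuous M (fun x => g (it g n x))). apply cont_comp; auto.
Qed.

Lemma fin_min (P : nat -> R -> Prop) n :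
  (forall i, (i <= n)%nat -> exists e, 0 < e /\ forall e', 0 < e' -> e' <= e -> P i e') ->
  exists e, 0 < e /\ forall e', 0 < e' -> e' <= e -> forall i, (i <= n)%nat -> P i e'.
Proof.
  induction n; intros H.
  - destruct (H 0%nat (le_n _)) as [e [He P0]]. exists e; split; auto.
    intros e' H1 H2 i Hi. replace i with 0%nat by lia. auto.
  - destruct IHn as [e1 [He1 P1]]. { intros i Hi; apply H; lia. }
    destruct (H (S n) (le_n _)) as [e2 [He2 P2]].
    exists (Rmin e1 e2); split. { now apply Rmin_pos. }
    intros e' H1 H2 i Hi.
    destruct (Nat.eq_dec i (S n)) as [->|Hne].
    + apply P2; auto. eapply Rle_trans; [exact H2| apply Rmin_r].
    + apply P1; [auto| |lia]. eapply Rle_trans; [exact H2| apply Rmin_l].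
Qed.

Definition per g q N := (1 <= N)%nat /\ forall k, it g (N*k) q = q.

Lemma per_of g q : periodic_point M (autonomous M g) q -> exists N, per g q N.
Proof.
  intros [N [HN Hk]]. exists N; split; auto. intros k. rewrite <- ncomp_auto. apply Hk.
Qed.

Lemma orbit_red g q N : per g q N -> forall t, exists i, (i < N)%nat /\ it g t q = it g i q.
Proof.
  intros [HN Hk] t. exists (t mod N)%nat. split.
  - apply Nat.mod_upper_bound; lia.
  - rewrite (Nat.div_mod_eq t N) at 1. rewrite Nat.add_comm, it_add, Hk. reflexivity.
Qed.

Lemma ball_open z r : is_open M (fun w => d z w < r).
Proof.
  intros w Hw. exists (r - d z w); split; [lra|].
  intros y Hy. pose proof (Defs.dist_tri M z w y). lra.
Qed.

Lemma d_self x : d x x = 0.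
Proof. now apply Defs.dist_eq0. Qed.

Lemma two_orbits g : infinite_space M -> dense M (periodic_point M (autonomous M g)) ->
  exists q1 N1 q2 N2 d0, per g q1 N1 /\ per g q2 N2 /\ 0 < d0 /\
    forall t s, d0 <= d (it g t q1) (it g s q2).
Proof.
  intros Hinf Hd.
  assert (Hne : exists x : M, True).
  { apply NNPP; intro Hn. apply Hinf. exists nil. intros x. apply Hn. now exists x. }
  destruct Hne as [x0 _].
  destruct (Hd (fun _ => True)) as [q1 [_ Hq1]].
  { intros x _. exists 1; split; [lra|auto]. } { now exists x0. }
  destruct (per_of _ _ Hq1) as [N1 HN1].
  assert (Hz : exists z, ~ In z (map (fun i => it g i q1) (seq 0 N1))).
  { apply not_all_ex_not. intros Hall. apply Hinf. eexists; exact Hall. }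
  destruct Hz as [z Hz].
  assert (Hpos : forall i, (i < N1)%nat -> 0 < d z (it g i q1)).
  { intros i Hi. destruct (Defs.dist_nonneg M z (it g i q1)) as [H|H]; auto.
    exfalso. apply Hz. symmetry in H. apply Defs.dist_eq0 in H. rewrite H at 1.
    apply (in_map (fun i => it g i q1)). apply in_seq. lia. }
  destruct (fin_min (fun i e => (i < N1)%nat -> e <= d z (it g i q1)) N1) as [r [Hr Pr]].
  { intros i _. destruct (Nat.lt_decidable i N1) as [Hi|Hi].
    - exists (d z (it g i q1)); split; auto.
    - exists 1; split; [lra|]. intros; lia. }
  destruct (Hd (fun w => d z w < r)) as [q2 [Hzq2 Hq2]].
  { apply ball_open. } { exists z. rewrite d_self. auto. }
  destruct (per_of _ _ Hq2) as [N2 HN2].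
  assert (Hneq : forall t s, it g t q1 <> it g s q2).
  { intros t s E.
    destruct HN2 as [HN2a HN2b].
    assert (E2 : q2 = it g (N2 * (s+1) - s + t) q1).
    { rewrite <- (HN2b (s+1)%nat) at 1.
      transitivity (it g (N2*(s+1) - s) (it g s q2)).
      { rewrite <- it_add. f_equal. nia. }
      rewrite <- E, <- it_add. reflexivity. }
    destruct (orbit_red _ _ _ HN1 (N2 * (s+1) - s + t)) as [i [Hi Ei]].
    rewrite Ei in E2.
    assert (r <= d z (it g i q1)) by (apply (Pr r); [lra|lra|lia|exact Hi]).
    rewrite <- E2 in H. lra. }
  destruct (fin_min (fun i e => (i < N1)%nat -> forall j, (j < N2)%nat ->
              e <= d (it g i q1) (it g j q2)) N1) as [d0 [Hd0 P0]].
  { intros i _.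
    destruct (fin_min (fun j e => (j < N2)%nat -> e <= d (it g i q1) (it g j q2)) N2)
      as [e [He Pe]].
    { intros j _. destruct (Nat.lt_decidable j N2) as [Hj|Hj].
      - exists (d (it g i q1) (it g j q2)); split; auto.
        destruct (Defs.dist_nonneg M (it g i q1) (it g j q2)) as [H|H]; auto.
        exfalso. symmetry in H. apply Defs.dist_eq0 in H. exact (Hneq _ _ H).
      - exists 1; split; [lra|]. intros; lia. }
    exists e; split; auto. intros e' H1 H2 _ j Hj. apply (Pe e'); auto; lia. }
  exists q1, N1, q2, N2, d0. split; [auto|split;[auto|split;[auto|]]].
  intros t s.
  destruct (orbit_red _ _ _ HN1 t) as [i [Hi ->]].
  destruct (orbit_red _ _ _ HN2 s) as [j [Hj ->]].
  apply (P0 d0); auto; [lra|lia].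
Qed.

Lemma banks g : continuous M g -> infinite_space M -> transitive M (autonomous M g) ->
  dense M (periodic_point M (autonomous M g)) ->
  exists delta, 0 < delta /\ forall x U, is_open M U -> U x ->
    exists y n, U y /\ (1 <= n)%nat /\ d (it g n x) (it g n y) > delta.
Proof.
  intros Hc Hinf Htr Hd.
  destruct (two_orbits g Hinf Hd) as [q1 [N1 [q2 [N2 [d0 [HN1 [HN2 [Hd0 Hsep]]]]]]]].
  exists (d0/8). split; [lra|].
  intros x U HU Ux.
  destruct (HU x Ux) as [eU [HeU PU]].
  set (dl := d0/8).
  assert (Hdl : 0 < dl) by (unfold dl; lra).
  set (eps := Rmin dl eU).
  assert (Heps : 0 < eps) by (apply Rmin_pos; auto).
  assert (Heps1 : eps <= dl) by apply Rmin_l.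
  assert (Heps2 : eps <= eU) by apply Rmin_r.
  assert (Hq : exists q N, per g q N /\ forall t, 4*dl <= d x (it g t q)).
  { destruct (classic (forall t, 4*dl <= d x (it g t q1))) as [H1|H1].
    { exists q1, N1; auto. }
    destruct (classic (forall t, 4*dl <= d x (it g t q2))) as [H2|H2].
    { exists q2, N2; auto. }
    exfalso.
    apply not_all_ex_not in H1. destruct H1 as [t H1]. apply Rnot_le_lt in H1.
    apply not_all_ex_not in H2. destruct H2 as [s H2]. apply Rnot_le_lt in H2.
    pose proof (Hsep t s). pose proof (Defs.dist_tri M (it g t q1) x (it g s q2)).
    rewrite Defs.dist_sym in H1. unfold dl in *. lra. }
  destruct Hq as [q [N [HN Hfar]]].
  destruct (Hd (fun w => d x w < eps)) as [p [Hxp Hp]].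
  { apply ball_open. } { exists x. rewrite d_self. auto. }
  destruct (per_of _ _ Hp) as [n [Hn Hpn]].
  set (V := fun w => forall i, (i <= n)%nat -> d (it g i q) (it g i w) < dl).
  assert (HV : is_open M V).
  { intros w Vw.
    destruct (fin_min (fun i e => forall w', d w w' < e -> d (it g i q) (it g i w') < dl) n)
      as [e [He Pe]].
    { intros i Hi.
      pose proof (Vw i Hi) as Vi.
      destruct (cont_it g Hc i w (dl - d (it g i q) (it g i w))) as [r [Hr Pr]]; [lra|].
      exists r; split; auto. intros e' H1 H2 w' Hw'.
      pose proof (Pr w' ltac:(lra)).
      pose proof (Defs.dist_tri M (it g i q) (it g i w) (it g i w')). lra. }
    exists e; split; auto. intros y Hy i Hi. apply (Pe e); auto; lra. }
  destruct (Htr (fun w => d x w < eps) V) as [k [Hk [y [Hxy Vy]]]].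
  { apply ball_open. } { exact HV. } { exists x. rewrite d_self. auto. }
  { exists q. intros i _. rewrite d_self. auto. }
  rewrite ncomp_auto in Vy.
  set (j := (k / n + 1)%nat).
  pose proof (Nat.div_mod_eq k n) as Edm.
  pose proof (Nat.mod_upper_bound k n ltac:(lia)) as Emod.
  assert (Hj1 : (k < n * j)%nat) by (unfold j; nia).
  assert (Hj2 : (n * j <= k + n)%nat) by (unfold j; nia).
  set (i := (n * j - k)%nat).
  assert (Ei : it g (n*j) y = it g i (it g k y)).
  { rewrite <- it_add. f_equal. unfold i. lia. }
  assert (Vi : d (it g i q) (it g (n*j) y) < dl).
  { rewrite Ei. apply Vy. unfold i. lia. }
  pose proof (Hfar i) as Fi.
  pose proof (Hpn j) as Pj.
  pose proof (Defs.dist_tri M x p (it g i q)).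
  pose proof (Defs.dist_tri M p (it g (n*j) y) (it g i q)).
  rewrite (Defs.dist_sym M (it g (n*j) y) (it g i q)) in H0.
  assert (Hfar2 : 2*dl < d p (it g (n*j) y)) by lra.
  pose proof (Defs.dist_tri M p (it g (n*j) x) (it g (n*j) y)).
  destruct (Rlt_or_le dl (d (it g (n*j) x) (it g (n*j) y))) as [Hc1|Hc1].
  - exists y, (n*j)%nat. split; [apply PU; lra|]. split; [lia|]. exact Hc1.
  - exists p, (n*j)%nat. split; [apply PU; lra|]. split; [lia|].
    rewrite Pj, Defs.dist_sym. lra.
Qed.

End H.

Theorem mainTheorem17 (M : MetricSpace) (f : nat -> M -> M) (m : nat) :
  compact_space M ->
  infinite_space M ->
  (1 <= m)%nat ->
  periodic_seq M f m ->
  (forall n, (1 <= n)%nat -> continuous M (f n)) ->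
  (forall n, (1 <= n)%nat -> surjective M (f n)) ->
  transitive M (autonomous M (ncomp M f m)) ->
  dense M (periodic_point M (autonomous M (ncomp M f m))) ->
  devaney_chaotic M f.
Proof.
  intros _ Hinf Hm Hp Hc _ Htr Hd.
  assert (Hg : continuous M (ncomp M f m)) by (apply cont_ncomp; auto).
  split; [|split].
  - intros U V HU HV NU NV.
    destruct (Htr U V HU HV NU NV) as [n [Hn [x [Ux Vx]]]].
    exists (n*m)%nat. split; [nia|]. exists x. split; auto.
    rewrite ncomp_mult by auto. rewrite <- ncomp_auto. exact Vx.
  - intros U HU NU. destruct (Hd U HU NU) as [x [Ux Px]].
    exists x. split; auto.
    destruct (per_of M _ _ Px) as [N [HN Hk]].
    exists (N*m)%nat. split; [nia|]. intros k.
    replace (N*m*k)%nat with ((N*k)*m)%nat by ring.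
    rewrite ncomp_mult by auto. apply Hk.
  - destruct (banks M _ Hg Hinf Htr Hd) as [dl [Hdl P]].
    exists dl. split; auto. intros x U HU Ux.
    destruct (P x U HU Ux) as [y [n [Uy [Hn Hd']]]].
    exists y, (n*m)%nat. split; auto. split; [nia|].
    rewrite !ncomp_mult by auto. exact Hd'.
Qed.
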